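(* Let $\Gamma$ be a hyperbolic graph and $D\ge 2$ an integer. Then the $2D$-polarized lattice $\mathcal{F}_h(\Gamma)$ is hyperbolic if and only if an intrinsic polarization $h_\Gamma$ of $\Gamma$ exists and $2D\le h_\Gamma^2$.
   Context: Graphs are finite, without loops or multiple edges. For a graph $\Gamma$, $\mathbb{Z}\Gamma$ is the lattice freely generated by the vertices, with $v^2=-2$ and $u\cdot v=1$ or $0$ according as distinct vertices $u,v$ are adjacent or not. For a lattice $L$, $\ker L=\{x\in L: x\cdot y=0\ \forall y\in L\}$, and $L/\ker$ denotes $L/\ker L$ with the induced form. The lattice $\mathcal{F}_h(\Gamma):=(\mathbb{Z}\Gamma\oplus\mathbb{Z}h)/\ker$, where the form on $\mathbb{Z}\Gamma\oplus\mathbb{Z}h$ (a direct sum of groups, not an orthogonal sum) extends that of $\mathbb{Z}\Gamma$ by $h^2=2D$ and $v\cdot h=1$ for every vertex $v$. A lattice is hyperbolic if the positive inertia index of its real quadratic form is $1$; $\Gamma$ is hyperbolic if $\mathbb{Z}\Gamma$ is. An intrinsic polarization is a vector $h_\Gamma\in\mathbb{Z}\Gamma\otimes\mathbb{Q}$ with $v\cdot h_\Gamma=1$ for every vertex $v$; if it exists, it is unique modulo $\ker\mathbb{Z}\Gamma$, so $h_\Gamma^2\in\mathbb{Q}$ is well defined. *)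

(* Defs.v *)
From HB Require Import structures.
From mathcomp Require Import all_boot all_order all_algebra.
From mathcomp Require Import reals.
Set Implicit Arguments. Unset Strict Implicit. Unset Printing Implicit Defensive.
Import Order.TTheory GRing.Theory Num.Theory.
Local Open Scope ring_scope.

(* A lattice freely generated by a finite set I of generators, given by its
   Gram function g : I -> I -> K (g i j = i . j). *)
Definition qform (K : ringType) (I : finType) (g : I -> I -> K) (x : I -> K) : K :=
  \sum_(i : I) \sum_(j : I) x i * x j * g i j.

(* The real quadratic form of g is positive definite on the span of the r
   vectors vs_0, ..., vs_(r-1) (which are then automatically independent). *)
Definition pos_def_on (R : realType) (I : finType) (g : I -> I -> R) (r : nat)
    (vs : 'I_r -> I -> R) : Prop :=
  forall a : 'I_r -> R, (exists k, a k != 0) ->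
    0 < qform g (fun i => \sum_(k < r) a k * vs k i).

Definition pos_inertia_ge (R : realType) (I : finType) (g : I -> I -> R) (r : nat) : Prop :=
  exists vs : 'I_r -> I -> R, pos_def_on g vs.

Definition pos_inertia_eq (R : realType) (I : finType) (g : I -> I -> R) (k : nat) : Prop :=
  pos_inertia_ge g k /\ ~ pos_inertia_ge g k.+1.

Definition hyperbolic_gram (R : realType) (I : finType) (g : I -> I -> R) : Prop :=
  pos_inertia_eq g 1.

(* Gram function of Z Gamma for a simple graph given by e : rel T. *)
Definition gram_graph (K : ringType) (T : finType) (e : rel T) (u v : T) : K :=
  if u == v then - 2%:R else if e u v then 1 else 0.

(* Gram function of Z Gamma (+) Z h, generators option T (None = h):
   h^2 = 2D, v.h = 1 for every vertex v. *)
Definition gram_Fh (K : ringType) (T : finType) (e : rel T) (D : nat)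
    (x y : option T) : K :=
  match x, y with
  | Some u, Some v => gram_graph K e u v
  | None, None => (2 * D)%:R
  | _, _ => 1
  end.

(* h = sum_u c u * u in Z Gamma (x) Q is an intrinsic polarization:
   v . h = 1 for every vertex v. *)
Definition intrinsic_polarization (T : finType) (e : rel T) (c : T -> rat) : Prop :=
  forall v : T, \sum_(u : T) c u * gram_graph rat e v u = 1.

(* Main.v *)
Require Import Defs.
From HB Require Import structures.
From mathcomp Require Import all_boot all_order all_algebra.
From mathcomp Require Import reals.
From mathcomp Require Import ring lra.
Set Implicit Arguments. Unset Strict Implicit. Unset Printing Implicit Defensive.
Import Order.TTheory GRing.Theory Num.Theory.
Local Open Scope ring_scope.

Lemma sum_option (R : nmodType) (T : finType) (F : option T -> R) :
  \sum_(x : option T) F x = F None + \sum_(u : T) F (Some u).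
Proof.
rewrite (bigD1 None) //=; congr (_ + _).
rewrite (reindex_omap Some (fun x => x)) /=; last by case.
by apply: eq_bigl => u; rewrite eqxx.
Qed.

Definition bil (R : ringType) (T : finType) (g : T -> T -> R) (x y : T -> R) : R :=
  \sum_(i : T) \sum_(j : T) x i * y j * g i j.

Lemma bilE (R : comRingType) (T : finType) (g : T -> T -> R) x y :
  bil g x y = \sum_i x i * (\sum_j y j * g i j).
Proof. by apply: eq_bigr => i _; rewrite mulr_sumr; apply: eq_bigr => j _; rewrite mulrA. Qed.

Lemma bilDl (R : comRingType) (T : finType) (g : T -> T -> R) x y z :
  bil g (fun i => x i + y i) z = bil g x z + bil g y z.
Proof. rewrite !bilE -big_split /=; apply: eq_bigr => i _; by rewrite mulrDl. Qed.

Lemma bilC (R : comRingType) (T : finType) (g : T -> T -> R) x y :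
  (forall i j, g i j = g j i) -> bil g x y = bil g y x.
Proof.
move=> gs; rewrite /bil exchange_big /=; apply: eq_bigr => i _; apply: eq_bigr => j _.
by rewrite gs; ring.
Qed.

Lemma bilDr (R : comRingType) (T : finType) (g : T -> T -> R) x y z :
  (forall i j, g i j = g j i) -> bil g z (fun i => x i + y i) = bil g z x + bil g z y.
Proof. move=> gs; rewrite (bilC z) // bilDl (bilC x) // (bilC y) //. Qed.

Lemma bilZl (R : comRingType) (T : finType) (g : T -> T -> R) a x y :
  bil g (fun i => a * x i) y = a * bil g x y.
Proof. rewrite !bilE mulr_sumr; apply: eq_bigr => i _; by rewrite mulrA. Qed.

Lemma bilZr (R : comRingType) (T : finType) (g : T -> T -> R) a x y :
  (forall i j, g i j = g j i) -> bil g x (fun i => a * y i) = a * bil g x y.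
Proof. move=> gs; rewrite (bilC x) // bilZl (bilC y) //. Qed.

Lemma qformD (R : comRingType) (T : finType) (g : T -> T -> R) x y :
  (forall i j, g i j = g j i) ->
  qform g (fun i => x i + y i) = qform g x + 2 * bil g x y + qform g y.
Proof.
have qb : forall z, qform g z = bil g z z by [].
move=> gs; rewrite !qb bilDl !bilDr // (bilC y x) //; ring.
Qed.

Lemma qformZ (R : comRingType) (T : finType) (g : T -> T -> R) a x :
  qform g (fun i => a * x i) = a ^+ 2 * qform g x.
Proof.
rewrite /qform mulr_sumr; apply: eq_bigr => i _; rewrite mulr_sumr; apply: eq_bigr => j _; ring.
Qed.

Lemma qform_split (R : comRingType) (T : finType) (e : rel T) (D : nat) x :
  qform (gram_Fh R e D) x = qform (gram_graph R e) (fun u => x (Some u))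
    + 2 * x None * \sum_u x (Some u) + x None ^+ 2 * (2 * D)%:R.
Proof.
rewrite /qform sum_option sum_option /=.
rewrite [X in _ + X = _](eq_bigr (fun u => x (Some u) * x None + \sum_v x (Some u) * x (Some v) * gram_graph R e u v)); last by move=> u _; rewrite sum_option /= mulr1.
rewrite big_split /= !mulr_sumr.
have -> : \sum_i x (Some i) * x None = \sum_u x None * x (Some u) * 1.
  by apply: eq_bigr => i _; rewrite mulr1 mulrC.
have -> : \sum_i 2 * x None * x (Some i) = 2 * \sum_u x None * x (Some u) * 1.
  by rewrite mulr_sumr; apply: eq_bigr => i _; rewrite mulr1 mulrA.
ring.
Qed.

Lemma sum_enum (R : nmodType) (T : finType) (F : T -> R) :
  \sum_(u : T) F u = \sum_(i < #|T|) F (enum_val i).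
Proof. by rewrite (reindex (@enum_val T predT)) //=; apply: onW_bij; apply: enum_val_bij. Qed.

Lemma dichotomy (T : finType) (G : T -> T -> rat) (gs : forall u v, G u v = G v u) :
  (exists c : T -> rat, forall v, \sum_u c u * G v u = 1) \/
  (exists k : T -> rat, (forall v, \sum_u k u * G v u = 0) /\ \sum_u k u != 0).
Proof.
pose n := #|T|.
pose A : 'M[rat]_(n, n) := \matrix_(i, j) G (enum_val i) (enum_val j).
pose b : 'rV[rat]_n := const_mx 1.
case: (boolP (b <= A)%MS) => [/submxP [x hx] | nb].
  left; exists (fun u => x 0 (enum_rank u)) => v.
  have := congr1 (fun M : 'rV[rat]_n => M 0 (enum_rank v)) hx; rewrite !mxE => ->.
  rewrite sum_enum; apply: eq_bigr => i _; rewrite mxE enum_valK enum_rankK gs //.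
right; pose K := cokermx A.
have hAK := mulmx_coker A.
have nz : b *m K != 0 by rewrite -submxE.
have [j0 hj0] : exists j, (b *m K) 0 j != 0.
  case: (pickP (fun j => (b *m K) 0 j != 0)) => [j hj|h0]; first by exists j.
  move/negP: nz => nz; exfalso; apply: nz; apply/eqP/matrixP => i j.
  by rewrite (ord1 i) [RHS]mxE; apply/eqP; rewrite -[_ == _]negbK h0.
exists (fun u => K (enum_rank u) j0); split.
  move=> v; rewrite sum_enum; transitivity ((A *m K) (enum_rank v) j0); last by rewrite hAK mxE.
  rewrite mxE; apply: eq_bigr => i _; rewrite [A _ _]mxE enum_valK enum_rankK mulrC //.
move: hj0; rewrite [(b *m K) _ _]mxE [in X in _ -> X]sum_enum.
suff -> : \sum_j b 0 j * K j j0 = \sum_(i < #|T|) K (enum_rank (enum_val i)) j0 by [].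
by apply: eq_bigr => i _; rewrite mxE mul1r enum_valK.
Qed.

Lemma qform_ext (R : ringType) (T : finType) (g : T -> T -> R) x y :
  (forall i, x i = y i) -> qform g x = qform g y.
Proof. by move=> h; apply: eq_bigr => i _; apply: eq_bigr => j _; rewrite !h. Qed.

Lemma bil_one (R : comRingType) (T : finType) (g : T -> T -> R) z c :
  (forall v, \sum_u c u * g v u = 1) -> bil g z c = \sum_u z u.
Proof. by move=> hc; rewrite bilE; apply: eq_bigr => i _; rewrite hc mulr1. Qed.

Lemma bil_zero (R : comRingType) (T : finType) (g : T -> T -> R) z k :
  (forall v, \sum_u k u * g v u = 0) -> bil g z k = 0.
Proof. by move=> hk; rewrite bilE big1 // => i _; rewrite hk mulr0. Qed.

Lemma key1 (R : comRingType) (T : finType) (e : rel T) (D : nat) c x :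
  (forall i j, gram_graph R e i j = gram_graph R e j i) ->
  (forall v, \sum_u c u * gram_graph R e v u = 1) ->
  qform (gram_Fh R e D) x =
  qform (gram_graph R e) (fun u => x (Some u) + x None * c u)
  + x None ^+ 2 * ((2 * D)%:R - qform (gram_graph R e) c).
Proof.
move=> gs hc; rewrite qform_split qformD // qformZ bilZr // bil_one //.
have -> : qform (gram_graph R e) c = \sum_u c u by rewrite -(bil_one c hc).
ring.
Qed.

Lemma ord2_cases (k : 'I_2) : k = ord0 \/ k = ord_max.
Proof. by case: k => [[|[|m]] hk]; [left|right|]; try apply/val_inj. Qed.

Lemma sum2 (R : nmodType) (F : 'I_2 -> R) : \sum_(k < 2) F k = F ord0 + F ord_max.
Proof. by rewrite big_ord_recr big_ord1 /=; congr (F _ + _); apply/val_inj. Qed.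

Lemma sqr_pos (R : realDomainType) (x : R) : x != 0 -> 0 < x ^+ 2.
Proof. by move=> h; rewrite lt0r sqrf_eq0 h sqr_ge0. Qed.

Theorem proposition2p8 (R : realType) (T : finType) (e : rel T)
    (e_sym : symmetric e) (e_irr : irreflexive e) (D : nat) (hD : (2 <= D)%N)
    (hypG : hyperbolic_gram (gram_graph R e)) :
  hyperbolic_gram (gram_Fh R e D) <->
  exists c : T -> rat, intrinsic_polarization e c /\
    (2 * D)%:R <= qform (gram_graph rat e) c.
Proof.
have gsR : forall i j, gram_graph R e i j = gram_graph R e j i.
  by move=> i j; rewrite /gram_graph eq_sym e_sym.
have gsQ : forall i j, gram_graph rat e i j = gram_graph rat e j i.
  by move=> i j; rewrite /gram_graph eq_sym e_sym.
have rg : forall u v, ratr (gram_graph rat e u v) = gram_graph R e u v :> R.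
  move=> u v; rewrite /gram_graph; case: (u == v); last case: (e u v);
  by rewrite ?rmorphN ?rmorph1 ?rmorph0 ?rmorph_nat.
have Qr : forall c : T -> rat, ratr (qform (gram_graph rat e) c) =
    qform (gram_graph R e) (fun u => ratr (c u)) :> R.
  move=> c; rewrite /qform rmorph_sum; apply: eq_bigr => i _.
  rewrite rmorph_sum; apply: eq_bigr => j _; by rewrite !rmorphM -rg.
have Sr : forall (c : T -> rat) v, ratr (\sum_u c u * gram_graph rat e v u) =
    \sum_u ratr (c u) * gram_graph R e v u :> R.
  by move=> c v; rewrite rmorph_sum; apply: eq_bigr => j _; rewrite !rmorphM -rg.
have [p hp] : exists p : T -> R, forall a, a != 0 ->
    0 < qform (gram_graph R e) (fun i => a * p i).
  case: hypG => [[vs hvs] _]; exists (vs ord0) => a ha.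
  have := hvs (fun _ => a) (ex_intro _ ord0 ha).
  by rewrite (@qform_ext _ _ _ _ (fun i => a * vs ord0 i)) // => i; rewrite big_ord1.
have P0 : 0 < qform (gram_graph R e) p.
  by have := hp 1 (oner_neq0 _); rewrite (@qform_ext _ _ _ _ p) // => i; rewrite mul1r.
split.
- case=> _ not2.
  have [[c hc] | [k [hk hs]]] := dichotomy gsQ.
  + exists c; split => //; rewrite leNgt; apply/negP => lt; apply: not2.
    pose cR := fun u => ratr (c u) : R.
    have hcR : forall v, \sum_u cR u * gram_graph R e v u = 1.
      by move=> v; rewrite -Sr hc rmorph1.
    have pos : 0 < (2 * D)%:R - qform (gram_graph R e) cR.
      by rewrite subr_gt0 -Qr -(rmorph_nat (@ratr R)) ltr_rat.
    exists (fun k o => if (k : nat) == 0%N then (if o is Some u then p u else 0)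
                      else (if o is Some u then - cR u else 1)).
    move=> a [k hk]; rewrite (key1 _ _ gsR hcR).
    rewrite (@qform_ext _ _ _ _ (fun u => a ord0 * p u)); last first.
      by move=> u; rewrite !sum2 /=; ring.
    rewrite sum2 /= mulr0 add0r mulr1.
    have [a0z|a0nz] := eqVneq (a ord0) 0.
      have a1nz : a ord_max != 0.
        by case: (ord2_cases k) => hk'; move: hk; rewrite hk' // a0z eqxx.
      rewrite a0z (@qform_ext _ _ _ _ (fun u => 0 * p u)) // qformZ expr0n /= mul0r add0r.
      by apply: mulr_gt0 => //; apply: sqr_pos.
    have h1 := hp _ a0nz.
    have h2 : 0 <= a ord_max ^+ 2 * ((2 * D)%:R - qform (gram_graph R e) cR).
      by apply: mulr_ge0; [apply: sqr_ge0 | apply: ltW].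
    lra.
  + exfalso; apply: not2.
    pose kR := fun u => ratr (k u) : R.
    have hkR : forall v, \sum_u kR u * gram_graph R e v u = 0.
      by move=> v; rewrite -Sr hk rmorph0.
    have hsR : \sum_u kR u != 0 by rewrite -rmorph_sum fmorph_eq0.
    pose P := qform (gram_graph R e) p.
    pose S := \sum_u p u.
    pose s := \sum_u kR u.
    pose t := (S ^+ 2 + 1) / (P * (2 * s)).
    have ht : t * s * P * 2 = S ^+ 2 + 1.
      rewrite /t; field; apply/andP; split => //; apply/negP => /eqP h; move: P0; rewrite -/P h ltxx //.
    exists (fun k o => if (k : nat) == 0%N then (if o is Some u then p u else 0)
                      else (if o is Some u then t * kR u else 1)).
    move=> a ha; rewrite qform_split.
    rewrite (@qform_ext _ _ _ _ (fun u => a ord0 * p u + (a ord_max * t) * kR u)); last first.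
      by move=> u; rewrite !sum2 /=; ring.
    rewrite qformD // qformZ qformZ bilZr // bilZl // bil_zero // .
    have -> : qform (gram_graph R e) kR = 0 by apply: bil_zero.
    rewrite sum2 /= mulr0 add0r mulr1.
    rewrite (eq_bigr (fun u => a ord0 * p u + a ord_max * t * kR u)); last first.
      by move=> u _; rewrite sum2 /=; ring.
    rewrite big_split /= -!mulr_sumr -/P -/S -/s.
    set a0 := a ord0; set a1 := a ord_max.
    match goal with |- is_true (0 < ?G) => have E : G * P = (a0 * P + a1 * S) ^+ 2 + a1 ^+ 2 * (1 + (2 * D)%:R * P) end.
      transitivity ((a0 * P + a1 * S) ^+ 2 - a1 ^+ 2 * S ^+ 2 + a1 ^+ 2 * (t * s * P * 2)
         + a1 ^+ 2 * (2 * D)%:R * P); first by rewrite /P; ring.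
      rewrite ht; ring.
    have DP : 0 <= (2 * D)%:R * P by apply: mulr_ge0 => //; apply: ltW.
    suff : 0 < (a0 * P + a1 * S) ^+ 2 + a1 ^+ 2 * (1 + (2 * D)%:R * P).
      by rewrite -E pmulr_lgt0.
    have [a1z|a1nz] := eqVneq a1 0.
      have a0nz : a0 != 0.
        by case: ha => k' hk'; case: (ord2_cases k') => e'; move: hk'; rewrite e' // -/a1 a1z eqxx.
      rewrite a1z expr0n /= mul0r addr0 mul0r addr0; apply: sqr_pos.
      by rewrite mulf_neq0 // lt0r_neq0.
    have := sqr_pos a1nz; have := sqr_ge0 (a0 * P + a1 * S); nra.
- case=> c [hc hle].
  pose cR := fun u => ratr (c u) : R.
  have hcR : forall v, \sum_u cR u * gram_graph R e v u = 1.
    by move=> v; rewrite -Sr hc rmorph1.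
  have hle' : (2 * D)%:R <= qform (gram_graph R e) cR.
    by rewrite -Qr -(rmorph_nat (@ratr R)) ler_rat.
  split.
  + exists (fun _ o => if o is Some u then p u else 0).
    move=> a [k hk]; rewrite (key1 _ _ gsR hcR) big_ord1 /= mulr0 expr0n /= mul0r addr0.
    rewrite (@qform_ext _ _ _ _ (fun u => a ord0 * p u)); last first.
      by move=> u; rewrite big_ord1 mul0r addr0.
    have ek : (ord0 : 'I_1) = k by apply/val_inj; case: k {hk} => [[|m]] //.
    by apply: hp; rewrite ek.
  + case=> vs hvs; apply: hypG.2.
    exists (fun k u => vs k (Some u) + vs k None * cR u) => a ha.
    have := hvs a ha; rewrite (key1 _ _ gsR hcR).
    rewrite (@qform_ext _ _ _ _ (fun u => \sum_(k < 2) a k * (vs k (Some u) + vs k None * cR u))); last first.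
      by move=> u; rewrite mulr_suml -big_split /=; apply: eq_bigr => i _; ring.
    have : (\sum_(k < 2) a k * vs k None) ^+ 2 * ((2 * D)%:R - qform (gram_graph R e) cR) <= 0.
      by apply: mulr_ge0_le0; [apply: sqr_ge0 | rewrite subr_le0].
    lra.
Qed.
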